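(* There is a randomized algorithm in the CongestedClique model which, on a connected, simple, undirected graph $G=(V,E)$ with $n$ vertices and a given integer $\tau\ge 1$, ends with every vertex $v$ holding a walk of length $\tau'$ starting at $v$, where $\tau\le\tau'=O(\tau)$ ($\tau'$ the smallest power of $2$ that is at least $\tau$), such that each such walk is distributed as a simple random walk of length $\tau'$ on $G$ started at $v$ (walks held by different vertices need not be independent). With high probability (probability at least $1-n^{-c}$ for any desired constant $c>0$, the constants in the bounds depending on $c$), the algorithm runs in (i) $O\!\left(\frac{\tau}{n}\log\tau\log n\right)$ rounds if $\tau=\Omega(n/\log n)$, and (ii) $O(\log \tau)$ rounds if $\tau = O(n/\log n)$.
   Context: The CongestedClique model: the input is an $n$-vertex graph $G=(V,E)$ whose vertices are identified with $n$ machines with IDs $1,\dots,n$; machine $i$ initially knows vertex $i$, all edges of $G$ incident to $i$, and $n$. Computation proceeds in synchronous rounds; in each round every machine performs arbitrary local computation (using private randomness) and then sends a possibly different message of $O(\log n)$ bits to every other machine. The complexity of an algorithm is its number of rounds. A simple random walk on $G$ moves from a vertex $u$ to a uniformly random neighbor of $u$ at each step. *)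

(* Defs.v *)
From HB Require Import structures.
From mathcomp Require Import all_boot all_order all_algebra.
From mathcomp Require Import all_classical all_reals all_analysis.
From mathcomp Require Import Rstruct Rstruct_topology.
Set Implicit Arguments. Unset Strict Implicit. Unset Printing Implicit Defensive.
Import Order.TTheory GRing.Theory Num.Theory.

Notation RR := Rdefinitions.R.

(* A simple undirected graph on vertex set 'I_n (machine i <-> vertex i). *)
Definition simple_graph n (G : rel 'I_n) : Prop :=
  symmetric G /\ irreflexive G.
Definition connected_graph n (G : rel 'I_n) : Prop :=
  forall x y : 'I_n, connect G x y.

Definition neighbours n (G : rel 'I_n) (u : 'I_n) : {set 'I_n} :=
  [set y | G u y].
Definition degree n (G : rel 'I_n) (u : 'I_n) : nat := #|neighbours G u|.

Fixpoint rw_prob n (G : rel 'I_n) (L : nat) (u : 'I_n) (w : seq 'I_n)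
  {struct L} : RR :=
  match L, w with
  | 0, [:: x] => if x == u then 1 else 0
  | L'.+1, x :: ((y :: _) as w') =>
      if (x == u) && G u y then ((degree G u)%:R)^-1 * rw_prob G L' y w'
      else 0
  | _, _ => 0
  end%R.

Definition pow2_ceil (tau : nat) : nat := 2 ^ up_log 2 tau.

(* An algorithm, uniform in n and in the input parameter tau.
   - [State] : arbitrary local state of a machine.
   - messages have O(log n) bits: they are elements of 'I_(n ^ msg_exp).
   - private randomness: at initialisation and in every round each machine
     draws a fresh uniform element of 'I_(rnd n tau).+1 (independent across
     machines and rounds); rnd is arbitrary.
   - [init n tau i N r] : initial local computation of machine i knowing n,
     tau, its ID and its neighbourhood N, with random draw r.
   - [send n tau s r j] : message sent to machine j in a round by a machine in
     state s with random draw r (of this round).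
   - [recv n tau s r m] : new state after receiving m j from every machine j.
   - [output s] : the walk held by the machine (None = not finished yet). *)
Record algorithm := Algorithm {
  State : Type;
  msg_exp : nat;
  rnd : nat -> nat -> nat;
  init : forall n tau : nat, 'I_n -> {set 'I_n} -> 'I_(rnd n tau).+1 -> State;
  send : forall n tau : nat, State -> 'I_(rnd n tau).+1 -> 'I_n -> 'I_(n ^ msg_exp);
  recv : forall n tau : nat, State -> 'I_(rnd n tau).+1 ->
           ('I_n -> 'I_(n ^ msg_exp)) -> State;
  output : State -> option (seq nat)
}.

Arguments init a n tau : clear implicits.
Arguments send a n tau : clear implicits.
Arguments recv a n tau : clear implicits.

Section Execution.
Variables (A : algorithm) (n tau : nat) (G : rel 'I_n).

Definition rtape := nat -> 'I_n -> 'I_(rnd A n tau).+1.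

(* configuration after t rounds (draw 0 used at init, draw t in round t) *)
Fixpoint config (rho : rtape) (t : nat) : 'I_n -> State A :=
  match t with
  | 0 => fun i => init A n tau i (neighbours G i) (rho 0 i)
  | t'.+1 =>
      let s := config rho t' in
      fun i => recv A n tau (s i) (rho t i)
                    (fun j => send A n tau (s j) (rho t j) i)
  end.

Definition halted (cfg : 'I_n -> State A) : bool :=
  [forall i, output (cfg i) != None].

Fixpoint final_by (rho : rtape) (t : nat) : option ('I_n -> State A) :=
  match t with
  | 0 => if halted (config rho 0) then Some (config rho 0) else None
  | t'.+1 =>
      match final_by rho t' with
      | Some c => Some c
      | None => if halted (config rho t) then Some (config rho t) else None
      end
  end.

(* randomness used up to (and including) round t *)
Definition sample (t : nat) :=
  {ffun 'I_t.+1 -> {ffun 'I_n -> 'I_(rnd A n tau).+1}}.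

Definition extend t (f : sample t) : rtape :=
  fun k i => match insub k with Some k' => f k' i | None => ord0 end.

(* probability of an event depending only on the randomness of rounds <= t *)
Definition Pr (t : nat) (E : rtape -> bool) : RR :=
  (#|[set f : sample t | E (extend f)]|%:R / #|{: sample t}|%:R)%R.

Definition terminated_by (t : nat) (rho : rtape) : bool :=
  if final_by rho t is Some _ then true else false.

Definition holds_by (t : nat) (v : 'I_n) (w : seq 'I_n) (rho : rtape) : bool :=
  if final_by rho t is Some c then output (c v) == Some (map val w) else false.

End Execution.


Arguments Pr A n tau t E : clear implicits.
Arguments terminated_by A n tau G t rho : clear implicits.
Arguments holds_by A n tau G t v w rho : clear implicits.

(* Main.v *)
Require Import Defs.
From HB Require Import structures.
From mathcomp Require Import all_boot all_order all_algebra.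
From mathcomp Require Import all_classical all_reals all_analysis.
From mathcomp Require Import Rstruct Rstruct_topology.
From mathcomp Require Import zify ring lra.
Set Implicit Arguments. Unset Strict Implicit. Unset Printing Implicit Defensive.
Import Order.TTheory GRing.Theory Num.Theory.

Definition L_of tau := pow2_ceil tau.
Definition B_of n tau := minn (L_of tau) n.-1.
Definition K_of n tau := up_log 2 (B_of n tau).+1.
Definition chunks_of n tau := (L_of tau + (B_of n tau).-1) %/ B_of n tau.

Definition Tdig n tau := {ffun 'I_(L_of tau) -> 'I_(n`!)}.
Definition myrnd (n tau : nat) : nat := #|{: Tdig n tau}|.-1.
Lemma myrnd_eq n tau : (myrnd n tau).+1 = #|{: Tdig n tau}|.
Proof. by rewrite /myrnd card_ffun card_ord prednK // expn_gt0 fact_gt0. Qed.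
Definition dec n tau (r : 'I_(myrnd n tau).+1) : Tdig n tau :=
  enum_val (cast_ord (myrnd_eq n tau) r).
Definition samp n tau (u : 'I_n) (N : {set 'I_n}) (r : 'I_(myrnd n tau).+1)
  (g : nat) : 'I_n :=
  match (insub g : option 'I_(L_of tau)) with
  | Some g' => nth u (enum N) (dec r g' %% #|N|)
  | None => u end.

Definition tick K (ck : nat * nat * nat) : nat * nat * nat :=
  let '(c, k, p) := ck in
  if p == 0 then (c, k, 1) else if k.+1 < K then (c, k.+1, 0) else (c.+1, 0, 0).
Definition clock K t := iter t (tick K) (0, 0, 0).

Record mst := MSt { s_n : nat; s_tau : nat; s_me : nat; s_cnt : nat;
  s_smp : nat -> nat; s_row : nat -> nat; s_colA : nat -> nat;
  s_colB : nat -> nat; s_walk : nat -> nat }.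

Lemma ord_gt0 n (j : 'I_n) : 0 < n ^ 2.
Proof. by rewrite expn_gt0 (leq_ltn_trans (leq0n j) (ltn_ord j)). Qed.
Definition mkmsg n (j : 'I_n) (v : nat) : 'I_(n ^ 2) :=
  Ordinal (ltn_pmod v (ord_gt0 j)).

Definition my_init n tau (i : 'I_n) (N : {set 'I_n}) (r : 'I_(myrnd n tau).+1) : mst :=
  let sm := fun g => val (samp i N r g) in
  MSt n tau i 0 sm (fun j => if j == 0 then val i else sm j.-1)
      (fun _ => 0) (fun _ => 0)
      (fun g => if g == 0 then val i else if g == 1 then sm 0 else 0).

Definition my_send n tau (s : mst) (r : 'I_(myrnd n tau).+1) (j : 'I_n) : 'I_(n ^ 2) :=
  let '(c, k, p) := clock (K_of n tau) (s_cnt s) in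
  mkmsg j (if p == 0 then s_row s j * n + (if 2 ^ k <= j then s_row s (j - 2 ^ k) else 0)
           else if 2 ^ k <= s_me s then s_colA s (s_colB s j) else s_colA s j).

Definition liftm n (F : 'I_n -> nat) (y : nat) : nat :=
  match (insub y : option 'I_n) with Some y' => F y' | None => 0 end.

Definition my_recv n tau (s : mst) (r : 'I_(myrnd n tau).+1) (m : 'I_n -> 'I_(n ^ 2)) : mst :=
  let '(c, k, p) := clock (K_of n tau) (s_cnt s) in
  let B := B_of n tau in
  if p == 0 then
    MSt (s_n s) (s_tau s) (s_me s) (s_cnt s).+1 (s_smp s) (s_row s)
        (liftm (fun y => val (m y) %/ n)) (liftm (fun y => val (m y) %% n)) (s_walk s)
  else
    let row' := fun j => if j <= B then liftm (fun y => val (m y)) j else s_row s j in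
    if k.+1 < K_of n tau then
      MSt (s_n s) (s_tau s) (s_me s) (s_cnt s).+1 (s_smp s) row'
          (fun _ => 0) (fun _ => 0) (s_walk s)
    else
      MSt (s_n s) (s_tau s) (s_me s) (s_cnt s).+1 (s_smp s)
          (fun j => if j == 0 then row' B else s_smp s (c.+1 * B + j.-1))
          (fun _ => 0) (fun _ => 0)
          (fun g => if (c * B <= g) && (g <= c * B + B) then row' (g - c * B) else s_walk s g).

Definition my_output (s : mst) : option (seq nat) :=
  let n := s_n s in let tau := s_tau s in
  let '(c, _, _) := clock (K_of n tau) (s_cnt s) in
  if (L_of tau == 1) || (chunks_of n tau <= c) then
    Some [seq s_walk s g | g <- iota 0 (L_of tau).+1] else None.

Definition myA : algorithm :=
  @Algorithm mst 2 myrnd my_init my_send my_recv my_output.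

Lemma clock_inv K t : 0 < K ->
  let '(c, k, p) := clock K t in k < K /\ p < 2.
Proof.
move=> K0; elim: t => [|t IH]; first by [].
rewrite /clock iterS -/(clock K t).
case: (clock K t) IH => [[c k] p] [kK p2] /=.
case: (p == 0) => //. case: ifP => //.
Qed.

Section Sim.
Variables (n tau : nat) (G : rel 'I_n) (rho : rtape myA n tau).

Definition S (x : 'I_n) (g : nat) : 'I_n := samp x (neighbours G x) (rho 0 x) g.
Fixpoint Y (g : nat) (x : 'I_n) : 'I_n :=
  match g with 0 => x | g'.+1 => S (Y g' x) g' end.
Definition hh c j : 'I_n -> 'I_n :=
  if j == 0 then Y (c * B_of n tau) else fun x => S x (c * B_of n tau + j.-1).
Fixpoint Hk c k j : 'I_n -> 'I_n :=
  match k with 0 => hh c j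
  | k'.+1 => if 2 ^ k' <= j then fun x => Hk c k' j (Hk c k' (j - 2 ^ k') x)
             else Hk c k' j end.
Fixpoint segd c a d : 'I_n -> 'I_n :=
  match d with 0 => hh c a
  | d'.+1 => fun x => hh c (a + d'.+1) (segd c a d' x) end.

Lemma segd_comp c a d1 d2 x :
  segd c (a + d1 + 1) d2 (segd c a d1 x) = segd c a (d1 + d2 + 1) x.
Proof.
elim: d2 => [|d2 IH] /=; first by rewrite addn0 !addn1 /= addnS.
rewrite IH. have -> : d1 + d2.+1 + 1 = (d1 + d2 + 1).+1 by lia.
rewrite /=; congr (hh _ _ _); lia.
Qed.

Lemma Hk_segd c k j x : Hk c k j x = segd c (j + 1 - 2 ^ k) (j - (j + 1 - 2 ^ k)) x.
Proof.
elim: k j x => [|k IH] j x /=.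
  by rewrite expn0 addnK subnn.
have P : 0 < 2 ^ k by rewrite expn_gt0.
rewrite expnS mul2n -addnn.
case: ifP => Hj.
  rewrite !IH.
  set a := (j - 2 ^ k + 1 - 2 ^ k).
  set d1 := (j - 2 ^ k - a).
  have -> : j + 1 - 2 ^ k = a + d1 + 1 by rewrite /a /d1; lia.
  rewrite segd_comp.
  have -> : j + 1 - (2 ^ k + 2 ^ k) = a by rewrite /a; lia.
  congr segd; rewrite /a /d1; lia.
rewrite IH.
have -> : j + 1 - 2 ^ k = 0 by move/negbT: Hj; rewrite -ltnNge; lia.
have -> : j + 1 - (2 ^ k + 2 ^ k) = 0 by move/negbT: Hj; rewrite -ltnNge; lia.
by [].
Qed.

Lemma segd0 c j x : segd c 0 j x = Y (c * B_of n tau + j) x.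
Proof.
elim: j => [|j IH] /=; first by rewrite /hh /= addn0.
by rewrite IH /hh /= addnS.
Qed.

Lemma Hk_full c k j x : j < 2 ^ k -> Hk c k j x = Y (c * B_of n tau + j) x.
Proof.
move=> H; rewrite Hk_segd.
have -> : j + 1 - 2 ^ k = 0 by lia.
by rewrite subn0 segd0.
Qed.


Definition rowI c k (x : 'I_n) (j : nat) : nat :=
  val (if j <= B_of n tau then Hk c k j x else hh c j x).
Definition walkI c (x : 'I_n) (g : nat) : nat :=
  if g <= maxn 1 (c * B_of n tau) then val (Y g x) else 0.
Definition ideal t (x : 'I_n) : mst :=
  let '(c, k, p) := clock (K_of n tau) t in
  MSt n tau x t (fun g => val (S x g)) (rowI c k x)
    (if p == 0 then fun _ => 0 else liftm (fun y => rowI c k y x))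
    (if p == 0 then fun _ => 0 else
       liftm (fun y => if 2 ^ k <= x then rowI c k y (x - 2 ^ k) else 0))
    (walkI c x).

Lemma liftm_val (F : 'I_n -> nat) (x : 'I_n) : liftm F (val x) = F x.
Proof. by rewrite /liftm valK. Qed.
Lemma liftm_ord (F : 'I_n -> nat) (x : 'I_n) : liftm F (nat_of_ord x) = F x.
Proof. by rewrite /liftm valK. Qed.

Lemma mkmsg_val (j : 'I_n) v : v < n ^ 2 -> val (mkmsg j v) = v.
Proof. by move=> H; rewrite /= modn_small. Qed.

Lemma rowI_lt c k x j : rowI c k x j < n.
Proof. exact: ltn_ord. Qed.

Lemma liftm_lt (F : 'I_n -> nat) j (H : j < n) : liftm F j = F (Ordinal H).
Proof. by rewrite /liftm insubT. Qed.

Lemma pair_dec a b : a < n -> b < n ->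
  ((a * n + b) %% n ^ 2) %/ n = a /\ ((a * n + b) %% n ^ 2) %% n = b.
Proof.
move=> Ha Hb.
have n0 : 0 < n by lia.
rewrite modn_small; last first.
  have H1 : a.+1 * n <= n * n by rewrite leq_mul2r Ha orbT.
  rewrite mulSn in H1; rewrite expnS expn1; lia.
by rewrite divnMDl // divn_small // addn0 modnMDl modn_small.
Qed.

Hypothesis n2 : 1 < n.
Hypothesis tau1 : 0 < tau.

Lemma L_gt0 : 0 < L_of tau.
Proof. by rewrite /L_of /pow2_ceil expn_gt0. Qed.
Lemma B_gt0 : 0 < B_of n tau.
Proof. by rewrite /B_of leq_min L_gt0 /= -subn1 subn_gt0. Qed.
Lemma B_le : B_of n tau <= n.-1.
Proof. by rewrite /B_of geq_minr. Qed.
Lemma B_K : (B_of n tau).+1 <= 2 ^ K_of n tau.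
Proof. by rewrite /K_of up_logP. Qed.
Lemma K_gt0 : 0 < K_of n tau.
Proof. by rewrite /K_of up_log_gt0 /= ltnS B_gt0. Qed.

Lemma sim t : config G rho t = ideal t.
Proof.
elim: t => [|t IH]; apply: funext => x.
  rewrite /ideal /= /my_init; congr MSt.
    apply: funext => j; rewrite /rowI /= /hh mul0n add0n; by case: (j <= B_of n tau); case: (j == 0).
  apply: funext => g; rewrite /walkI /= mul0n; case: g => [|[|g]] //.
change (config G rho t.+1 x) with (@my_recv n tau (config G rho t x) (rho t.+1 x)
   (fun j => @my_send n tau (config G rho t j) (rho t.+1 j) x)).
rewrite IH /ideal /clock iterS -/(clock _ t).
have := clock_inv t K_gt0.
case E: (clock _ t) => [[c k] p] [kK p2].
rewrite /my_recv /my_send /= E.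
case: p p2 E => [|[|//]] _ E /=.
  congr MSt; apply: funext => y; rewrite /liftm; case: insubP => // y' _ _;
  (have Hb : (if 2 ^ k <= x then rowI c k y' (x - 2 ^ k) else 0) < n by case: ifP => _; [exact: rowI_lt | lia]);
  by case: (pair_dec (rowI_lt c k y' x) Hb).
have BK := B_K. have Bn := B_le.
have RS : forall j, (if j <= B_of n tau then liftm (fun y : 'I_n => (if 2 ^ k <= y then liftm ((rowI c k)^~ y) (liftm (fun y0 : 'I_n => if 2 ^ k <= y then rowI c k y0 (y - 2 ^ k) else 0) x) else liftm ((rowI c k)^~ y) x) %% n ^ 2) j else rowI c k x j) = rowI c k.+1 x j.
  move=> j; case: ifP => jB; last by rewrite /rowI jB.
  have jn : j < n by lia.
  rewrite liftm_lt /= liftm_ord; case: ifP => kj.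
    rewrite {2}/rowI (_ : j - 2 ^ k <= B_of n tau); last by lia.
    rewrite kj liftm_val /= /rowI jB modn_small /=; last first.
      apply: (leq_trans (ltn_ord _)); rewrite expnS expn1; lia.
    by rewrite kj.
  rewrite liftm_ord /rowI /= jB modn_small /=; last first.
    apply: (leq_trans (ltn_ord _)); rewrite expnS expn1; lia.
  by rewrite kj.
case: ifP => kK1.
  by congr MSt; apply: funext => j; rewrite RS.
have kK2 : k.+1 = K_of n tau by lia.
congr MSt.
  apply: funext => j; rewrite RS; case: ifP => [/eqP ->|j0].
    rewrite /rowI leqnn Hk_full; last by rewrite kK2.
    by rewrite leq0n /= /hh /= mulSn addnC.
  by rewrite /rowI /=; case: ifP => _; rewrite /hh j0.
apply: funext => g; rewrite RS.
case: ifP => /andP.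
  case=> H1 H2; rewrite /rowI (_ : g - c * B_of n tau <= B_of n tau); last by lia.
  rewrite Hk_full; last by rewrite kK2; lia.
  rewrite /walkI (_ : g <= maxn 1 (c.+1 * B_of n tau)); last by rewrite mulSn; have := B_gt0; lia.
  by congr (val (Y _ x)); lia.
move=> H; rewrite /walkI.
have BB := B_gt0.
case: ifP => g1; case: ifP => g2 //.
  exfalso; apply: H; rewrite mulSn in g2; lia.
exfalso; move/negbT: g1; rewrite mulSn in g2; lia.
Qed.
End Sim.

Lemma final_by_some (A : algorithm) n tau (G : rel 'I_n) (rho : rtape A n tau) t cf :
  final_by G rho t = Some cf ->
  exists t0, t0 <= t /\ cf = config G rho t0 /\ halted (config G rho t0).
Proof.
elim: t cf => [|t IH] cf /=.
  by case: ifP => // H [<-]; exists 0.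
case E: (final_by G rho t) => [c|].
  by case=> <-; have [t0 [H1 H2]] := IH _ E; exists t0; split => //; lia.
by case: ifP => // H [<-]; exists t.+1.
Qed.

Lemma final_by_ge (A : algorithm) n tau (G : rel 'I_n) (rho : rtape A n tau) t0 t :
  t0 <= t -> halted (config G rho t0) -> exists cf, final_by G rho t = Some cf.
Proof.
elim: t => [|t IH] H Hh.
  have E0 : t0 = 0 by lia. rewrite E0 in Hh.
  by exists (config G rho 0); rewrite /= Hh.
rewrite [final_by _ _ _.+1]/=.
case E: (final_by G rho t) => [c|]; first by exists c.
case: (leqP t0 t) => Ht.
  by have [cf Ecf] := IH Ht Hh; rewrite Ecf in E.
have Et : t0 = t.+1 by lia. rewrite Et in Hh.
by exists (config G rho t.+1); rewrite Hh.
Qed.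

Lemma clock2 K t : clock K t.+2 = tick K (tick K (clock K t)).
Proof. by rewrite /clock !iterS. Qed.

Lemma clock_ck K c k : 0 < K -> clock K (c * K.*2) = (c, 0, 0) ->
  k < K -> clock K (c * K.*2 + k.*2) = (c, k, 0).
Proof.
move=> K0 Hc; elim: k => [|k IH] Hk; first by rewrite addn0.
rewrite doubleS addnS addnS clock2 IH; last by lia.
by rewrite /= Hk.
Qed.

Lemma clock_c K c : 0 < K -> clock K (c * K.*2) = (c, 0, 0).
Proof.
move=> K0; elim: c => [|c IH]; first by rewrite mul0n.
have -> : c.+1 * K.*2 = (c * K.*2 + (K.-1).*2).+2.
  rewrite mulSn -!muln2; lia.
by rewrite clock2 clock_ck //; [rewrite /= prednK // ltnn | lia].
Qed.

Definition T_of n tau :=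
  if L_of tau == 1 then 0 else chunks_of n tau * (K_of n tau).*2.

Lemma chunks_ge n tau : 0 < B_of n tau -> L_of tau <= chunks_of n tau * B_of n tau.
Proof.
move=> B0; rewrite /chunks_of.
have := divn_eq (L_of tau + (B_of n tau).-1) (B_of n tau).
have := ltn_pmod (L_of tau + (B_of n tau).-1) B0.
lia.
Qed.

Section Final.
Variables (n tau : nat) (G : rel 'I_n) (rho : rtape myA n tau).
Hypothesis n2 : 1 < n.
Hypothesis tau1 : 0 < tau.

Definition wlist (v : 'I_n) := [seq Y G rho g v | g <- iota 0 (L_of tau).+1].

Lemma out_ideal t x :
  my_output (ideal G rho t x) =
  let '(c, _, _) := clock (K_of n tau) t in
  if (L_of tau == 1) || (chunks_of n tau <= c) then Some (map val (wlist x)) else None.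
Proof.
rewrite /ideal; case E: (clock _ t) => [[c k] p]; rewrite /my_output /= E.
case: ifP => // H; congr Some; rewrite /wlist -map_comp /=.
have Hw : forall g, g <= L_of tau -> walkI G rho c x g = val (Y G rho g x).
  move=> g Hg; rewrite /walkI.
  have -> // : g <= maxn 1 (c * B_of n tau).
  case/orP: H => [/eqP HL | Hc]; first by rewrite HL in Hg; lia.
  have := chunks_ge (B_gt0 tau n2).
  have : chunks_of n tau * B_of n tau <= c * B_of n tau by rewrite leq_mul2r Hc orbT.
  lia.
congr cons.
apply/eq_in_map => g; rewrite mem_iota => /andP [_ Hg']; apply: Hw; lia.
Qed.

Lemma halted_iff t : halted (config G rho t) =
  let '(c, _, _) := clock (K_of n tau) t in (L_of tau == 1) || (chunks_of n tau <= c).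
Proof.
rewrite /halted (sim G rho n2 tau1).
have x0 : 'I_n by exists 0; lia.
case E: (clock _ t) => [[c k] p].
apply/forallP/idP.
  move=> /(_ x0); rewrite /= out_ideal E; by case: ifP.
by move=> H x; rewrite /= out_ideal E H.
Qed.

Lemma halted_T : halted (config G rho (T_of n tau)).
Proof.
rewrite halted_iff /T_of; case HL: (L_of tau == 1).
  by case: (clock _ 0) => [[c k] p].
by rewrite clock_c ?leqnn ?orbT // (K_gt0 tau n2).
Qed.

Lemma term_T : terminated_by myA n tau G (T_of n tau) rho.
Proof.
rewrite /terminated_by.
by have [cf ->] := final_by_ge (leqnn _) halted_T.
Qed.

Lemma holds_final t v w : T_of n tau <= t ->
  holds_by myA n tau G t v w rho = (wlist v == w).
Proof.
move=> Ht; rewrite /holds_by.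
have [cf Ecf] := final_by_ge Ht halted_T.
rewrite Ecf; have [t0 [_ [-> Hh]]] := final_by_some Ecf.
move: Hh; rewrite halted_iff (sim G rho n2 tau1) /= out_ideal.
case: (clock _ t0) => [[c k] p] H; rewrite H.
apply/eqP/eqP => [[] Heq|->] //.
by apply: (inj_map val_inj); exact: Heq.
Qed.

End Final.

Lemma foldr_prod_s (T : Type) (f : T -> nat) s :
  foldr muln 1 (map f s) = \prod_(x <- s) f x.
Proof. by elim: s => [|a s IH] /=; rewrite ?big_nil ?big_cons ?IH. Qed.
Lemma foldr_prod (T : finType) (f : T -> nat) :
  foldr muln 1 [seq f x | x : T] = \prod_(x : T) f x.
Proof. by rewrite -big_enum /= -foldr_prod_s. Qed.

Lemma card_fam (aT rT : finType) (P : aT -> pred rT) :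
  #|[pred F : {ffun aT -> rT} | [forall x, P x (F x)]]| = \prod_(x : aT) #|P x|.
Proof.
rewrite -foldr_prod -(card_family (fun x => P x)).
apply: eq_card => F; rewrite !inE /=.
by [].
Qed.

Lemma card_ord_pred M (P : pred nat) :
  #|[pred d : 'I_M | P d]| = \sum_(0 <= d < M) P d.
Proof.
rewrite -sum1_card big_mkcond /= big_mkord; apply: eq_bigr => i _.
by rewrite inE; case: (P i).
Qed.

Lemma count_res q D i : i < D ->
  \sum_(0 <= d < q * D) (d %% D == i) = q.
Proof.
move=> iD; have D0 : 0 < D by lia.
elim: q => [|q IH]; first by rewrite mul0n big_geq.
have -> : q.+1 * D = q * D + D by rewrite mulSn addnC.
rewrite (@big_cat_nat _ _ _ (q * D)) //=; last by lia.
rewrite IH.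
have -> : \sum_(q * D <= d < q * D + D) (d %% D == i) = \sum_(0 <= j < D) ((j + q * D) %% D == i).
  by rewrite -{1}[q * D]add0n big_addn (_ : q * D + D - q * D = D) //; lia.
have -> : \sum_(0 <= j < D) ((j + q * D) %% D == i) = \sum_(0 <= j < D) (j == i).
  apply: eq_big_nat => j jD; by rewrite addnC modnMDl modn_small.
rewrite addnC.
rewrite big_mkord (bigD1 (Ordinal iD)) //= eqxx big1 ?addn0 ?addn1 //.
move=> j /negbTE Hj; apply/eqP; rewrite eqb0; apply/negP => /eqP E.
by move: Hj; rewrite -val_eqE /= E eqxx.
Qed.

Lemma card_res M D i : i < D -> D %| M ->
  #|[pred d : 'I_M | d %% D == i]| = M %/ D.
Proof.
move=> iD /dvdnP [q ->]; rewrite (card_ord_pred (q * D) (fun d => d %% D == i)) count_res // mulnK //; lia.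
Qed.

Lemma card_choice n M (u : 'I_n) (N : {set 'I_n}) (y : 'I_n) :
  0 < #|N| -> #|N| %| M ->
  #|[pred d : 'I_M | nth u (enum N) (d %% #|N|) == y]| =
  if y \in N then M %/ #|N| else 0.
Proof.
move=> N0 NM.
have sz : size (enum N) = #|N| by rewrite cardE.
case: ifP => yN.
  have iN : index y (enum N) < #|N| by rewrite -sz index_mem mem_enum.
  rewrite -(card_res iN NM); apply: eq_card => d; rewrite !inE.
  have dN : d %% #|N| < #|N| by rewrite ltn_mod.
  apply/eqP/eqP => [<-|->].
    by rewrite index_uniq ?enum_uniq ?sz.
  by rewrite nth_index ?mem_enum.
apply: eq_card0 => d; rewrite !inE; apply/negP => /eqP E.
have : nth u (enum N) (d %% #|N|) \in enum N by rewrite mem_nth // sz ltn_mod.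
by rewrite E mem_enum yN.
Qed.

Section Count.
Variables (n tau : nat) (G : rel 'I_n).
Local Notation R := (myrnd n tau).+1.
Local Notation L := (L_of tau).
Local Notation M := (n`!).

Definition SF (F : 'I_n -> 'I_R) x g := samp x (neighbours G x) (F x) g.
Fixpoint YF (F : 'I_n -> 'I_R) g x : 'I_n :=
  match g with 0 => x | g'.+1 => SF F (YF F g' x) g' end.
Definition wlF F (v : 'I_n) := [seq YF F g v | g <- iota 0 L.+1].

Lemma Y_YF (rho : rtape myA n tau) g x : Y G rho g x = YF (rho 0) g x.
Proof. by elim: g => //= g ->. Qed.

Lemma wlist_wlF (rho : rtape myA n tau) v : wlist G rho v = wlF (rho 0) v.
Proof. by apply: eq_map => g; rewrite Y_YF. Qed.

Lemma wlF_eq F v w :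
  (wlF F v == w) = [&& size w == L.+1, nth v w 0 == v &
     [forall g : 'I_L, SF F (nth v w g) g == nth v w g.+1]].
Proof.
apply/eqP/and3P => [<-|[/eqP sw /eqP w0 /forallP H]].
  rewrite size_map size_iota; split => //.
  apply/forallP => g; have gL := ltn_ord g.
  rewrite /wlF !(nth_map 0) ?size_iota; try lia.
  rewrite !nth_iota ?add0n //; lia.
apply: (@eq_from_nth _ v); first by rewrite size_map size_iota sw.
move=> g; rewrite size_map size_iota => gL.
rewrite (nth_map 0) ?size_iota // nth_iota // add0n.
move: gL; elim: g => [|g IH] gL; first by rewrite w0.
rewrite /= IH; last by lia.
have gL' : g < L by lia.
by move: (H (Ordinal gL')) => /eqP.
Qed.


Lemma dec_bij : bijective (@dec n tau).
Proof.
exists (fun t => cast_ord (esym (myrnd_eq n tau)) (enum_rank t)) => r.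
  by rewrite /dec enum_valK cast_ordK.
by rewrite /dec cast_ordKV enum_rankK.
Qed.

Lemma card_bij (aT rT : finType) (f : aT -> rT) (P : pred rT) :
  bijective f -> #|[pred x | P (f x)]| = #|[pred y | P y]|.
Proof.
move=> fb; rewrite -(on_card_preimset (onW_bij [pred y | P y] fb)).
by apply: eq_card => x; rewrite !inE.
Qed.

Lemma samp_ord (u : 'I_n) N r (g : 'I_L) :
  samp u N r g = nth u (enum N) (dec r g %% #|N|).
Proof. by rewrite /samp valK. Qed.

Hypothesis deg_pos : forall u : 'I_n, 0 < #|neighbours G u|.

Lemma deg_dvd (u : 'I_n) : #|neighbours G u| %| M.
Proof.
apply: dvdn_fact; rewrite deg_pos /=.
by have := max_card (neighbours G u); rewrite card_ord.
Qed.

Variables (v : 'I_n) (w : seq 'I_n).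
Local Notation wn g := (nth v w g).
Definition cg (g : nat) := if wn g.+1 \in neighbours G (wn g) then M %/ #|neighbours G (wn g)| else 0.

Lemma count_event :
  #|[pred F : {ffun 'I_n -> 'I_R} | [forall g : 'I_L, SF F (wn g) g == wn g.+1]]|
  = \prod_(g < L) (cg g * M ^ n.-1).
Proof.
pose Q (u : 'I_n) (g : 'I_L) := [pred d : 'I_M | (wn g == u) ==>
   (nth u (enum (neighbours G u)) (d %% #|neighbours G u|) == wn g.+1)].
pose A (u : 'I_n) := [pred r : 'I_R | [forall g, Q u g (dec r g)]].
have -> : #|[pred F : {ffun 'I_n -> 'I_R} | [forall g : 'I_L, SF F (wn g) g == wn g.+1]]|
   = #|[pred F : {ffun 'I_n -> 'I_R} | [forall u, A u (F u)]]|.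
  apply: eq_card => F; rewrite !inE.
  apply/forallP/forallP => H.
    move=> u; apply/forallP => g; apply/implyP => /eqP E.
    by move: (H g); rewrite /SF samp_ord E.
  move=> g; move: (H (wn g)) => /forallP /(_ g) /implyP.
  by rewrite eqxx /SF samp_ord => /(_ isT).
rewrite (card_fam A).
have -> : \prod_(u : 'I_n) #|A u| = \prod_(u : 'I_n) \prod_(g < L) #|Q u g|.
  apply: eq_bigr => u _.
  rewrite (card_bij (fun t : Tdig n tau => [forall g, Q u g (t g)]) dec_bij).
  by rewrite (card_fam (fun g => Q u g)).
rewrite exchange_big /=; apply: eq_bigr => g _.
rewrite (bigD1 (wn g)) //=.
have -> : #|Q (wn g) g| = cg g.
  rewrite /cg -(@card_choice n M (wn g) (neighbours G (wn g)) (wn g.+1) (deg_pos _) (deg_dvd _)).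
  by apply: eq_card => d; rewrite !inE eqxx.
congr (_ * _).
rewrite (eq_bigr (fun _ => M)); last first.
  move=> u /negbTE Hu; rewrite -[RHS]card_ord; apply: eq_card => d.
  by rewrite !inE eq_sym Hu.
by rewrite prod_nat_const cardC1 card_ord.
Qed.

End Count.

Definition K0_of tau := up_log 2 tau.

Lemma L_eq tau : L_of tau = 2 ^ K0_of tau.
Proof. by []. Qed.

Lemma tau_le_L tau : tau <= L_of tau.
Proof. exact: up_logP. Qed.

Lemma L_lt tau : 0 < tau -> L_of tau < tau.*2.
Proof.
move=> t0; case: (ltnP 1 tau) => t1.
  have H := up_log_gtn (isT : 1 < 2) t1.
  have K0 : 0 < up_log 2 tau by rewrite up_log_gt0.
  rewrite /L_of /pow2_ceil; move: H K0; case: (up_log 2 tau) => [|k] // H _.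
  rewrite expnS /= in H *; lia.
have -> : tau = 1 by lia.
by rewrite /L_of /pow2_ceil up_log1.
Qed.

Lemma K0_bound tau : 1 < tau -> 2 ^ (K0_of tau).-1 < tau.
Proof. move=> t1; exact: up_log_gtn. Qed.

Lemma L1 tau : 0 < tau -> (L_of tau == 1) = (tau == 1).
Proof.
move=> t0; have := tau_le_L tau; have := L_lt t0.
case: (tau =P 1) => [->|H] /=; first by rewrite /L_of /pow2_ceil up_log1.
move=> _ H2; apply/eqP; lia.
Qed.

Lemma T_small n tau : 1 < tau -> L_of tau <= n.-1 ->
  T_of n tau = ((K0_of tau).+1).*2.
Proof.
move=> t1 Ln.
have tL := tau_le_L tau.
have HL : (L_of tau == 1) = false by apply/eqP; lia.
have B : B_of n tau = L_of tau by rewrite /B_of; apply/minn_idPl.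
have c1 : chunks_of n tau = 1.
  rewrite /chunks_of B.
  have L0 : 0 < L_of tau by lia.
  have -> : L_of tau + (L_of tau).-1 = 1 * L_of tau + (L_of tau).-1 by lia.
  by rewrite divnMDl // divn_small ?addn0 //; lia.
rewrite /T_of HL c1 mul1n /K_of B.
have K0 : 0 < K0_of tau by rewrite /K0_of up_log_gt0.
congr double; apply: up_log_eq => //.
rewrite /L_of /pow2_ceil -/(K0_of tau) expnS.
have := expn_gt0 2 (K0_of tau); lia.
Qed.

Lemma T_big n tau : 1 < n -> n.-1 < L_of tau ->
  let c := chunks_of n tau in let K := K_of n tau in
  [/\ T_of n tau = c * K.*2, c * n <= 8 * tau, 0 < K & 2 ^ K.-1 < n].
Proof.
move=> n1 Ln c K.
have t0 : 0 < tau.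
  case: (posnP tau) => // t0; move: Ln; rewrite t0 /L_of /pow2_ceil up_log0; lia.
have Lt := L_lt t0.
have B : B_of n tau = n.-1 by rewrite /B_of; apply/minn_idPr; lia.
have HL : (L_of tau == 1) = false by apply/eqP; lia.
have KK : K = up_log 2 n by rewrite /K /K_of B prednK //; lia.
split.
- by rewrite /T_of HL.
- rewrite /c /chunks_of B.
  have := leq_trunc_div (L_of tau + (n.-1).-1) (n.-1).
  rewrite mulnC => H.
  have : (L_of tau + (n.-1).-1) %/ n.-1 * n <= 2 * ((L_of tau + (n.-1).-1) %/ n.-1 * n.-1).
    rewrite mulnCA leq_mul2l; apply/orP; right; lia.
  lia.
- by rewrite KK up_log_gt0 n1.
- by rewrite KK; apply: up_log_gtn.
Qed.

Local Open Scope ring_scope.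

Lemma rw_prob_closed n (G : rel 'I_n) L (v : 'I_n) (w : seq 'I_n) :
  rw_prob G L v w =
  if (size w == L.+1) && (nth v w 0 == v) then
    \prod_(g < L) (if nth v w g.+1 \in neighbours G (nth v w g)
                   then ((degree G (nth v w g))%:R)^-1 else 0)
  else 0.
Proof.
elim: L v w => [|L IH] v w.
  case: w => [|x [|y s]] //=; by rewrite big_ord0; case: (x == v).
case: w => [|x [|y s]] //=.
rewrite IH /= eqxx andbT big_ord_recl /= !eqSS.
rewrite inE.
case: (x =P v) => [->|xv] /=; last by rewrite andbF.
case: (G v y) => /=; last by rewrite !mul0r andbT; case: (size s == L).
case: eqP => [sL|]; last by rewrite mulr0.
rewrite andbT; congr (_ * _); apply: eq_bigr => i _.
have iL := ltn_ord i.
have i1 : (i < size (y :: s))%N by rewrite /= ltnS sL ltnW.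
have i2 : (i < size s)%N by rewrite sL.
by rewrite add0n (set_nth_default y v i2) (set_nth_default y v i1).
Qed.

Section Prob.
Variables (n tau : nat) (G : rel 'I_n).
Hypothesis n2 : (1 < n)%N.
Hypothesis tau1 : (0 < tau)%N.
Hypothesis deg_pos : forall u : 'I_n, (0 < #|neighbours G u|)%N.
Local Notation R := (myrnd n tau).+1.
Local Notation L := (L_of tau).
Local Notation M := (n`!).
Local Notation X := {ffun 'I_n -> 'I_R}.

Lemma ext0 t (f : sample myA n tau t) : extend f 0%N = f ord0.
Proof.
apply: funext => i; rewrite /extend; case: insubP => [k _ kv|] //.
by congr (f _ i); apply: val_inj.
Qed.

Lemma card_first t (P : pred X) :
  #|[set f : sample myA n tau t | P (f ord0)]| = (#|[pred F | P F]| * #|X| ^ t)%N.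
Proof.
pose Q (k : 'I_t.+1) : pred X := if k == ord0 then P else predT.
have -> : #|[set f : sample myA n tau t | P (f ord0)]| =
          #|[pred f : sample myA n tau t | [forall k, Q k (f k)]]|.
  apply: eq_card => f; rewrite !inE; apply/idP/forallP => [H k|/(_ ord0)].
    by rewrite /Q; case: ifP => // /eqP ->.
  by rewrite /Q eqxx.
rewrite (card_fam Q) (bigD1 ord0) //=; congr (_ * _)%N.
rewrite (eq_bigr (fun _ => #|X|)); last first.
  move=> k /negbTE Hk; rewrite /Q Hk; apply: eq_card => F; by rewrite !inE.
by rewrite prod_nat_const cardC1 card_ord.
Qed.

End Prob.

Section Prob2.
Variables (n tau : nat) (G : rel 'I_n).
Hypothesis n2 : (1 < n)%N.
Hypothesis tau1 : (0 < tau)%N.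
Hypothesis deg_pos : forall u : 'I_n, (0 < #|neighbours G u|)%N.
Local Notation R := (myrnd n tau).+1.
Local Notation L := (L_of tau).
Local Notation M := (n`!).
Local Notation X := {ffun 'I_n -> 'I_R}.

Lemma cardX : #|X| = ((M ^ L) ^ n)%N.
Proof. by rewrite card_ffun !card_ord myrnd_eq card_ffun !card_ord. Qed.

Lemma Pr_holds t v w : (T_of n tau <= t)%N ->
  Pr myA n tau t (holds_by myA n tau G t v w) = rw_prob G L v w.
Proof.
move=> Ht; rewrite /Pr.
have -> : [set f : sample myA n tau t | holds_by myA n tau G t v w (extend f)] =
          [set f : sample myA n tau t | (fun F : X => wlF G F v == w) (f ord0)].
  by apply/setP => f; rewrite !inE holds_final // wlist_wlF ext0.
rewrite (card_first t (fun F : X => wlF G F v == w)).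
have -> : #|sample myA n tau t| = (#|X| ^ t.+1)%N by rewrite card_ffun card_ord.
rewrite natrM !natrX exprS.
have X0 : (#|X|%:R : RR) != 0 by rewrite pnatr_eq0 cardX -lt0n !expn_gt0 fact_gt0.
rewrite [X in _ / X]mulrC invfM mulrA mulfK ?expf_neq0 //.
rewrite rw_prob_closed.
have -> : #|[pred F : X | wlF G F v == w]| =
   if (size w == L.+1) && (nth v w 0 == v) then
     #|[pred F : X | [forall g : 'I_L, SF G F (nth v w g) g == nth v w g.+1]]| else 0%N.
  case: ifP => H.
    apply: eq_card => F; rewrite !inE wlF_eq.
    by case/andP: H => -> ->.
  apply: eq_card0 => F; rewrite !inE wlF_eq.
  by move: H; case: (size w == L.+1); case: (nth v w 0 == v).
case: ifP => _; last by rewrite mul0r.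
rewrite (count_event tau deg_pos) cardX.
have -> : ((M ^ L) ^ n = \prod_(g < L) M ^ n)%N.
  by rewrite prod_nat_const card_ord -!expnM mulnC.
rewrite !natr_prod -prodf_div; apply: eq_bigr => g _.
have M0 : (M%:R : RR) != 0 by rewrite pnatr_eq0 -lt0n fact_gt0.
rewrite /cg; case: ifP => adj; last by rewrite mul0r.
rewrite natrM natr_div ?deg_dvd //; last by rewrite unitfE pnatr_eq0 -lt0n deg_pos.
have D0 : (#|neighbours G (nth v w g)|%:R : RR) != 0 by rewrite pnatr_eq0 -lt0n deg_pos.
have EM : ((M%:R : RR) ^+ n = M%:R * M%:R ^+ n.-1) by rewrite -exprS prednK // ltnW.
rewrite !natrX EM.
rewrite /degree.
field.
by rewrite D0 M0 expf_neq0.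
Qed.

End Prob2.

Local Open Scope ring_scope.

Lemma ln2_gt0 : 0 < ln (2 : RR).
Proof. by apply: ln_gt0; lra. Qed.

Lemma pow_ln k m : (2 ^ k <= m)%N -> k%:R * ln (2 : RR) <= ln m%:R.
Proof.
move=> H.
have m0 : (0 < m)%N by have := expn_gt0 2 k; lia.
have -> : k%:R * ln (2 : RR) = ln ((2 ^ k)%N%:R).
  by rewrite natrX lnXn ?mulr_natl //; lra.
rewrite ler_ln ?ler_nat // posrE ltr0n //; by rewrite expn_gt0.
Qed.

Lemma ln_nat_ge m : (2 <= m)%N -> ln (2 : RR) <= ln m%:R.
Proof. by move=> H; have := @pow_ln 1 m; rewrite expn1 mul1r; apply. Qed.

Lemma time_small n tau : (0 < tau)%N -> (L_of tau <= n.-1)%N ->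
  (T_of n tau)%:R <= 6 / ln (2 : RR) * ln tau%:R.
Proof.
move=> t0 Ln; have l2 := ln2_gt0.
case: (ltnP 1 tau) => t1; last first.
  have -> : tau = 1%N by lia.
  by rewrite /T_of /L_of /pow2_ceil up_log1 /= ln1 mulr0.
rewrite T_small //.
have K0 : (0 < K0_of tau)%N by rewrite /K0_of up_log_gt0.
have h1 := pow_ln (ltnW (K0_bound t1)).
have h2 := ln_nat_ge t1.
rewrite -(prednK K0) -[X in X.*2]addn1 -muln2 natrM natrD.
set k := (K0_of tau).-1 in h1 *.
set T := ln tau%:R in h1 h2 *.
set l := ln (2 : RR) in l2 h1 h2 *.
rewrite mulrAC ler_pdivlMr //.

nra.
Qed.

Lemma time_big n tau : (1 < n)%N -> (n.-1 < L_of tau)%N ->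
  (T_of n tau)%:R <= 32 / (ln (2 : RR)) ^+ 2 * (tau%:R / n%:R * ln tau%:R * ln n%:R).
Proof.
move=> n1 Ln; have l2 := ln2_gt0.
have t1 : (1 < tau)%N.
  move: Ln; case: tau => [|[|tau]] //; rewrite /L_of /pow2_ceil ?up_log0 ?up_log1; lia.
have [-> cn K0 Kn] := T_big n1 Ln.
set c := chunks_of n tau in cn *; set K := K_of n tau in K0 Kn *.
have h1 := pow_ln (ltnW Kn).
have h2 := ln_nat_ge t1.
have h3 := ln_nat_ge n1.
have n0 : (0 : RR) < n%:R by rewrite ltr0n; lia.
have hc : (c * n)%:R <= (8 * tau)%:R :> RR by rewrite ler_nat.
rewrite !natrM in hc.
rewrite -[K in (c * K.*2)%N](prednK K0) -muln2 !natrM.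
set k := K.-1 in h1 *.
set T := ln tau%:R in h2 *.
set N := ln n%:R in h1 h3 *.
set l := ln (2 : RR) in l2 h1 h2 h3 *.
set C := c%:R in hc *.
have C0 : 0 <= C by rewrite ler0n.
have hb : k.+1%:R * l <= 2 * N.
  by rewrite -addn1 natrD mulrDl mul1r; lra.
have P1 : 0 <= C * n%:R by apply: mulr_ge0; [lra|rewrite ler0n].
have P2 : 0 <= k.+1%:R * l by apply: mulr_ge0; [rewrite ler0n|lra].
have key : (C * n%:R) * (k.+1%:R * l) * l <= (8 * tau%:R) * (2 * N) * T.
  apply: ler_pM; [by apply: mulr_ge0 | lra | | lra].
  by apply: ler_pM.
have E1 : C * (k.+1%:R * 2) = 2 * ((C * n%:R) * (k.+1%:R * l) * l) / (n%:R * l ^+ 2).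
  by field; lra.
have E2 : 32 / l ^+ 2 * (tau%:R / n%:R * T * N) = 2 * ((8 * tau%:R) * (2 * N) * T) / (n%:R * l ^+ 2).
  by field; lra.
by rewrite E1 E2 ler_wpM2r // ?invr_ge0 ?mulr_ge0 ?exprn_ge0 ?ler0n //; lra.
Qed.

Local Open Scope classical_set_scope.
Local Open Scope ring_scope.

Lemma deg_pos_conn n (G : rel 'I_n) : (1 < n)%N -> connected_graph G ->
  forall u : 'I_n, (0 < #|neighbours G u|)%N.
Proof.
move=> n1 Gc u.
have [y yu] : exists y : 'I_n, y != u.
  have h0 : (0 < n)%N by lia.
  have h1 : (1 < n)%N by lia.
  case: (u =P Ordinal h0) => [->|H]; last by exists (Ordinal h0); apply/eqP => E; apply: H.
  by exists (Ordinal h1).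
move: (Gc u y) => /connectP [[|z p]] /=.
  by move=> _ E; rewrite E eqxx in yu.
case/andP => Guz _ _; apply/card_gt0P; exists z; by rewrite inE.
Qed.

Local Close Scope classical_set_scope.
Lemma Pr_one n tau t (E : rtape myA n tau -> bool) : (forall rho, E rho) ->
  Pr myA n tau t E = 1.
Proof.
move=> H; rewrite /Pr.
have -> : #|[set f : sample myA n tau t | E (extend f)]| = #|sample myA n tau t|.
  by apply: eq_card => f; rewrite !inE H.
rewrite divff // pnatr_eq0 -lt0n card_ffun expn_gt0 card_ffun expn_gt0.
by rewrite card_ord.
Qed.

Local Open Scope classical_set_scope.

Local Open Scope classical_set_scope.
Local Open Scope ring_scope.

Theorem mainTheorem2 :
  forall c : RR, 0 < c ->
  exists A : algorithm,
    (* correctness: every vertex v ends holding a walk distributed as a simple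
       random walk of length tau' = pow2_ceil tau started at v *)
    (forall (n : nat) (G : rel 'I_n) (tau : nat),
        (2 <= n)%N -> simple_graph G -> connected_graph G -> (1 <= tau)%N ->
        forall (v : 'I_n) (w : seq 'I_n),
          (fun t : nat => Pr A n tau t (holds_by A n tau G t v w)) @ \oo -->
            rw_prob G (pow2_ceil tau) v w)
    /\
    (* (i) tau = Omega(n / log n): O(tau/n log tau log n) rounds w.h.p. *)
    (forall a : RR, 0 < a ->
      exists (C : RR) (n0 : nat), forall (n : nat) (G : rel 'I_n) (tau : nat),
        (n0 <= n)%N -> (2 <= n)%N -> simple_graph G -> connected_graph G ->
        (1 <= tau)%N ->
        a * n%:R / ln n%:R <= tau%:R ->
        exists t : nat,
          t%:R <= C * (tau%:R / n%:R * ln tau%:R * ln n%:R) /\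
          1 - powR n%:R (- c) <= Pr A n tau t (terminated_by A n tau G t))
    /\
    (* (ii) tau = O(n / log n): O(log tau) rounds w.h.p. *)
    (forall a : RR, 0 < a ->
      exists (C : RR) (n0 : nat), forall (n : nat) (G : rel 'I_n) (tau : nat),
        (n0 <= n)%N -> (2 <= n)%N -> simple_graph G -> connected_graph G ->
        (1 <= tau)%N ->
        tau%:R <= a * n%:R / ln n%:R ->
        exists t : nat,
          t%:R <= C * ln tau%:R /\
          1 - powR n%:R (- c) <= Pr A n tau t (terminated_by A n tau G t)).
Proof.
move=> c c0; exists myA; split; [|split].
- move=> n G tau n2 Gs Gc t1 v w.
  have dp := @deg_pos_conn n G n2 Gc.
  apply: cvg_trans (near_eq_cvg _) (cvg_cst (rw_prob G (pow2_ceil tau) v w)).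
  apply: filterS (nbhs_infty_ge (T_of n tau)) => t Ht /=.
  by rewrite Pr_holds.
- move=> a a0.
  exists (32 / (ln (2:RR)) ^+ 2 + 6 / (a * ln 2)), 0%N => n G tau _ n2 Gs Gc t1 Ha.
  exists (T_of n tau); split; last first.
    rewrite Pr_one; last by move=> rho; exact: term_T.
    by rewrite lerBlDr lerDl powR_ge0.
  have l2 := ln2_gt0.
  have n0 : (0 : RR) < n%:R by rewrite ltr0n; lia.
  have lnn : 0 < ln (n%:R : RR) by apply: ln_gt0; rewrite ltr1n.
  have lnt : 0 <= ln (tau%:R : RR) by apply: ln_ge0; rewrite ler1n.
  set l := ln (2 : RR) in l2 *.
  set Nn := ln (n%:R : RR) in lnn Ha *.
  set T0 := ln (tau%:R : RR) in lnt *.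
  set q := tau%:R / n%:R.
  have q0 : 0 <= q by rewrite /q divr_ge0 ?ler0n //; lra.
  have X0 : 0 <= q * T0 * Nn by rewrite !mulr_ge0 //; lra.
  have ha : a <= q * Nn.
    rewrite ler_pdivrMr // in Ha.
    rewrite /q mulrAC ler_pdivlMr //; lra.
  case: (leqP (L_of tau) n.-1) => HL.
    apply: le_trans (time_small t1 HL) _.
    rewrite -/l -/T0 mulrDl.
    have E : 6 / (a * l) * (q * T0 * Nn) = (6 / l * T0) * ((q * Nn) / a) by field; lra.
    have h1 : 6 / l * T0 <= 6 / (a * l) * (q * T0 * Nn).
      rewrite E ler_peMr //; first by rewrite mulr_ge0 // divr_ge0; lra.
      by rewrite ler_pdivlMr // mul1r.
    have h2 : 0 <= 32 / l ^+ 2 * (q * T0 * Nn).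
      by rewrite mulr_ge0 // divr_ge0 ?exprn_ge0; lra.
    lra.
  apply: le_trans (time_big n2 HL) _.
  rewrite -/l -/T0 -/Nn -/q.
  have E : (32 / l ^+ 2 + 6 / (a * l)) * (q * T0 * Nn) = 32 / l ^+ 2 * (q * T0 * Nn) + 6 / (a * l) * (q * T0 * Nn) by rewrite mulrDl.
  have h2 : 0 <= 6 / (a * l) * (q * T0 * Nn) by rewrite mulr_ge0 // divr_ge0 ?mulr_ge0; lra.
  rewrite E; lra.
- move=> a a0.
  exists (6 / ln (2:RR)), (Num.Def.archi_bound (expR (2 * a))) => n G tau n0 n2 Gs Gc t1 Ha.
  exists (T_of n tau); split; last first.
    rewrite Pr_one; last by move=> rho; exact: term_T.
    by rewrite lerBlDr lerDl powR_ge0.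
  have l2 := ln2_gt0.
  have n0' : (0 : RR) < n%:R by rewrite ltr0n; lia.
  have lnn : 2 * a <= ln (n%:R : RR).
    have hb := archi_boundP (ltW (expR_gt0 (2 * a))).
    have hn : (Num.Def.archi_bound (expR (2 * a)))%:R <= n%:R :> RR by rewrite ler_nat.
    rewrite -{1}(expRK (2 * a)) ler_ln ?posrE ?expR_gt0 //; lra.
  have HL : (L_of tau <= n.-1)%N.
    rewrite leqNgt; apply/negP => HL.
    have h1 := L_lt t1.
    have h2 : (n < tau.*2)%N by lia.
    have h3 : (n%:R : RR) < (tau * 2)%N%:R by rewrite ltr_nat muln2.
    rewrite natrM in h3.
    rewrite ler_pdivlMr in Ha; last lra.
    nra.
  exact: time_small t1 HL.
Qed.
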